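(* Let $\Pi$ be an $n$-dimensional linear space satisfying the exchange axiom and the axiom (P2), let $0<k<n-1$, let $B=\{p_1,\dots,p_{n+1}\}$ be a base of $\Pi$, let $\mathcal{B}_k$ be the base subset of $\mathcal{G}_k(\Pi)$ associated with $B$, and put $m=\max\{k,n-k-1\}$. Two distinct elements $U,U'$ of $\mathcal{B}_k$ are adjacent if and only if there exists a regular collection $\mathcal{R}^1,\dots,\mathcal{R}^m$ of $m$ complement subsets of $\mathcal{B}_k$ such that $U$ and $U'$ belong to each $\mathcal{R}^i$, $i=1,\dots,m$.
   Context: A linear space $\Pi=(P,\mathcal{L})$ is a set $P$ of points with a family $\mathcal{L}$ of proper subsets (lines) such that each line has at least two points and any two distinct points $p,q$ lie on exactly one line $pq$. A subspace is a set $S\subset P$ with $pq\subset S$ for all distinct $p,q\in S$; $\overline{X}$ is the smallest subspace containing $X$. A set $X$ is independent if $\overline{X}$ is not spanned by a proper subset of $X$; a base of $\Pi$ is an independent set spanning $P$. A subspace is $m$-dimensional if $m+1$ is the smallest number of points spanning it. Exchange axiom: for every $X\subset P$ and $p_1,p_2\in P\setminus\overline{X}$, $p_2\in\overline{X\cup\{p_1\}}$ implies $p_1\in\overline{X\cup\{p_2\}}$. Axiom (P2): every line has at least three points. $\mathcal{G}_k(\Pi)$ is the set of $k$-dimensional subspaces; two of them are adjacent if their intersection is $(k-1)$-dimensional. The base subset of $\mathcal{G}_k(\Pi)$ associated with a base $B$ is the set of all $k$-dimensional subspaces spanned by points of $B$. A subset $\mathcal{R}\subset\mathcal{B}_k$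 is exact if $\mathcal{B}_k$ is the unique base subset of $\mathcal{G}_k(\Pi)$ containing $\mathcal{R}$, and inexact otherwise. A complement subset of $\mathcal{B}_k$ is a set $\mathcal{R}\subset\mathcal{B}_k$ such that $\mathcal{B}_k\setminus\mathcal{R}$ is a maximal (under inclusion) inexact subset of $\mathcal{B}_k$. A collection $\mathcal{R}^1,\dots,\mathcal{R}^{m+1}$ of $m+1$ complement subsets is regular if $\mathcal{R}^1\cap\dots\cap\mathcal{R}^{m+1}$ consists of exactly one element; a collection of $m$ complement subsets is regular if it can be extended (by one more complement subset) to a regular collection of $m+1$ complement subsets. *)

(* Defs.v *)
From mathcomp Require Import all_boot.
Set Implicit Arguments. Unset Strict Implicit. Unset Printing Implicit Defensive.

Section LinearSpaces.
Variable P : Type.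
Variable L : (P -> Prop) -> Prop.   (* the family of lines *)

Definition subset {T} (A B : T -> Prop) := forall x, A x -> B x.
Definition seteq {T} (A B : T -> Prop) := forall x, A x <-> B x.

Definition is_linear_space : Prop :=
  (forall l, L l -> exists x, ~ l x) /\
  (forall l, L l -> exists p q, p <> q /\ l p /\ l q) /\
  (forall p q, p <> q -> exists l, L l /\ l p /\ l q /\
      forall l', L l' -> l' p -> l' q -> l' = l).

Definition is_subspace (S : P -> Prop) : Prop :=
  forall l, L l -> forall p q, p <> q -> S p -> S q -> l p -> l q ->
    forall x, l x -> S x.

Definition closure (X : P -> Prop) : P -> Prop :=
  fun p => forall S, is_subspace S -> subset X S -> S p.

Definition independent (X : P -> Prop) : Prop :=
  forall Y, subset Y X -> (exists x, X x /\ ~ Y x) -> closure Y <> closure X.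

Definition is_base (B : P -> Prop) : Prop :=
  independent B /\ closure B = (fun _ => True).

Definition range_of {I} (f : I -> P) : P -> Prop := fun x => exists i, f i = x.

Definition is_dim (S : P -> Prop) (m : nat) : Prop :=
  is_subspace S /\
  (exists f : 'I_m.+1 -> P, closure (range_of f) = S) /\
  (forall j (g : 'I_j -> P), j <= m -> closure (range_of g) <> S).

Definition exchange_axiom : Prop :=
  forall (X : P -> Prop) p1 p2, ~ closure X p1 -> ~ closure X p2 ->
    closure (fun x => X x \/ x = p1) p2 -> closure (fun x => X x \/ x = p2) p1.

Definition axiom_P2 : Prop :=
  forall l, L l -> exists a b c, l a /\ l b /\ l c /\ a <> b /\ a <> c /\ b <> c.

Definition adjacent (k : nat) (U U' : P -> Prop) : Prop :=
  is_dim (fun x => U x /\ U' x) k.-1.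

Definition family := (P -> Prop) -> Prop.

Definition base_subset (k : nat) (B : P -> Prop) : family :=
  fun U => is_dim U k /\ exists X, subset X B /\ closure X = U.

Definition exact (k : nat) (Bk R : family) : Prop :=
  subset R Bk /\
  forall B', is_base B' -> subset R (base_subset k B') -> seteq (base_subset k B') Bk.

Definition inexact (k : nat) (Bk R : family) : Prop :=
  subset R Bk /\ ~ exact k Bk R.

Definition complement_subset (k : nat) (Bk R : family) : Prop :=
  subset R Bk /\
  let C := fun U => Bk U /\ ~ R U in
  inexact k Bk C /\
  (forall S, subset C S -> subset S Bk -> (exists U, S U /\ ~ C U) -> ~ inexact k Bk S).

Definition regular_succ (k m : nat) (Bk : family) (Rs : 'I_m.+1 -> family) : Prop :=
  (forall i, complement_subset k Bk (Rs i)) /\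
  (forall i j, Rs i = Rs j -> i = j) /\
  exists U, forall V, (forall i, Rs i V) <-> V = U.

(* collection of m complement subsets extendable to a regular collection of m+1 *)
Definition regular (k m : nat) (Bk : family) (Rs : 'I_m -> family) : Prop :=
  (forall i, complement_subset k Bk (Rs i)) /\
  (forall i j, Rs i = Rs j -> i = j) /\
  exists R, regular_succ k Bk
    (fun i : 'I_m.+1 => match unlift ord_max i with
                        | Some j => Rs j | None => R end).

End LinearSpaces.

(* Main.v *)
Require Import Defs.
From mathcomp Require Import all_boot.
From Stdlib Require Import Classical ClassicalEpsilon FunctionalExtensionality PropExtensionality.
From mathcomp Require Import zify.
Set Implicit Arguments. Unset Strict Implicit. Unset Printing Implicit Defensive.



Section Gen.
Variables (P : Type) (L : (P -> Prop) -> Prop).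
Local Notation cl X := (Defs.closure L X).

Lemma cl_sub X : Defs.subset X (cl X).
Proof. by move=> x Xx S _ XS; apply: XS. Qed.

Lemma cl_subspace X : is_subspace L (cl X).
Proof.
move=> l Ll a b ab ha hb la lb x lx S hS XS.
by apply: (hS l Ll a b ab) => //; [apply: ha | apply: hb].
Qed.

Lemma cl_min S X : is_subspace L S -> Defs.subset X S -> Defs.subset (cl X) S.
Proof. by move=> hS XS x hx; apply: hx. Qed.

Lemma cl_mono X Y : Defs.subset X Y -> Defs.subset (cl X) (cl Y).
Proof. by move=> XY; apply: cl_min; [apply: cl_subspace | move=> x hx; apply: cl_sub; apply: XY]. Qed.

Lemma cl_idem X Y : Defs.subset X (cl Y) -> Defs.subset (cl X) (cl Y).
Proof. by move=> h; apply: cl_min => //; apply: cl_subspace. Qed.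

Lemma cl_empty X x : (forall y, ~ X y) -> cl X x -> False.
Proof.
move=> hX hx; apply: (hx (fun _ => False)); first by move=> l _ a b _ ha.
by move=> y /hX.
Qed.

Lemma sub_line S l a b c : is_subspace L S -> L l -> a <> b -> S a -> S b ->
  l a -> l b -> l c -> S c.
Proof. move=> hS Ll ab Sa Sb la lb lc; exact: (hS l Ll a b ab Sa Sb la lb c lc). Qed.

Lemma cl_fin X z : cl X z -> exists s : list P,
  (forall x, List.In x s -> X x) /\ cl (fun x => List.In x s) z.
Proof.
apply: (cl_min (S := fun z => exists s : list P,
  (forall x, List.In x s -> X x) /\ cl (fun x => List.In x s) z)).
- move=> l Ll a b ab [s1 [h1 c1]] [s2 [h2 c2]] la lb x lx.
  exists (s1 ++ s2); split.
    by move=> y hy; case: (List.in_app_or _ _ _ hy) => hy'; [apply: h1 | apply: h2].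
  apply: (@cl_subspace (fun y => List.In y (s1 ++ s2)) l Ll a b ab _ _ la lb x lx).
    by apply: cl_mono c1 => y hy; apply: List.in_or_app; left.
  by apply: cl_mono c2 => y hy; apply: List.in_or_app; right.
- move=> x hx; exists [:: x]; split.
    by move=> y [<-|[]].
  by apply: cl_sub; left.
Qed.

Lemma indep_not_in B Y x : independent L B -> B x ->
  Defs.subset Y (fun y => B y /\ y <> x) -> cl Y x -> False.
Proof.
move=> hB Bx YB clx.
apply: (hB (fun y => B y /\ y <> x)).
- by move=> y [].
- by exists x; split => //; case.
apply: functional_extensionality => z; apply: propositional_extensionality; split.
  by apply: cl_mono => y [].
apply: cl_idem => y By.
case: (classic (y = x)) => [->|ne].
  exact: cl_mono YB _ clx.
by apply: cl_sub.
Qed.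

Hypothesis Hex : exchange_axiom L.

Lemma cl_meet B X Y z : independent L B -> Defs.subset X B -> Defs.subset Y B ->
  cl X z -> cl Y z -> cl (fun x => X x /\ Y x) z.
Proof.
move=> hB XB YB /cl_fin [s [sX cs]] cY.
set W := fun x => X x /\ Y x.
suff H: forall s, (forall x, List.In x s -> X x) ->
    cl (fun x => List.In x s \/ W x) z -> cl W z.
  by apply: (H s sX); apply: cl_mono cs => x; left.
elim=> [|x s' IH] hs hz.
  by apply: cl_mono hz => y [[]|].
case: (classic (Y x)) => Yx.
  apply: IH; first by move=> y hy; apply: hs; right.
  apply: cl_mono hz => y [[<-|hy]|hy]; [right; split => //; apply: hs; left | left | right] => //.
set A := fun y => (List.In y s' /\ y <> x) \/ W y.
have AsW: Defs.subset A (fun y => List.In y s' \/ W y) by move=> y [[? _]|?]; [left|right].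
case: (classic (cl A z)) => hAz.
  apply: IH; first by move=> y hy; apply: hs; right.
  exact: cl_mono AsW _ hAz.
have hxs: Defs.subset (fun y => List.In y (x :: s') \/ W y) (fun y => A y \/ y = x).
  move=> y [[<-|hy]|hy]; [by right| |by left; right].
  by case: (classic (y = x)) => [->|ne]; [right | left; left].
case: (classic (cl A x)) => hAx.
  exfalso; apply: hAz.
  apply: (cl_idem (X := fun y => List.In y (x :: s') \/ W y)) hz.
  by move=> y /hxs [hy|->]; [apply: cl_sub | apply: hAx].
have hx := Hex hAx hAz (cl_mono hxs hz).
exfalso.
apply: (indep_not_in (Y := fun y => A y \/ Y y) hB (XB _ (hs x (or_introl erefl)))).
  move=> y [[[hy ne]|[_ Yy]]|Yy]; split => //.
  - by apply: XB; apply: hs; right.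
  - by apply: YB.
  - by move=> e; subst.
  - by apply: YB.
  - by move=> e; subst.
apply: (cl_idem (X := fun y => A y \/ y = z)) hx.
move=> y [hy|->]; first by apply: cl_sub; left.
by apply: cl_mono cY => y0 hy0; right.
Qed.

Lemma exch_step (G : list P) A y : cl (fun x => A x \/ List.In x G) y -> ~ cl A y ->
  exists G1 g G2, G = G1 ++ g :: G2 /\
    cl (fun x => A x \/ List.In x (G1 ++ G2) \/ x = y) g.
Proof.
elim: G => [|g G' IH] hy hA.
  by exfalso; apply: hA; apply: cl_mono hy => x [|[]].
case: (classic (cl (fun x => A x \/ List.In x G') y)) => h.
  have [G1 [g' [G2 [-> hg]]]] := IH h hA.
  exists (g :: G1), g', G2; split => //.
  apply: cl_mono hg => x [hx|[hx|hx]]; [by left | by right; left; right | by right; right].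
case: (classic (cl (fun x => A x \/ List.In x G') g)) => hg.
  exfalso; apply: h.
  apply: (cl_idem (X := fun x => A x \/ List.In x (g :: G'))) hy.
  move=> x [hx|[<-|hx]]; [by apply: cl_sub; left | exact: hg | by apply: cl_sub; right].
have hyg : cl (fun x => (A x \/ List.In x G') \/ x = g) y.
  by apply: cl_mono hy => x [hx|[<-|hx]]; [left; left | right | left; right].
have := Hex hg h hyg => hgy.
exists [::], g, G'; split => //.
by apply: cl_mono hgy => x [[hx|hx]|hx]; [left | right; left | right; right].
Qed.

End Gen.


Definition pb (Q : Prop) : bool := if excluded_middle_informative Q then true else false.
Lemma pbP Q : pb Q <-> Q.
Proof. by rewrite /pb; case: excluded_middle_informative. Qed.

Lemma in_In (T : eqType) (x : T) s : x \in s -> List.In x s.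
Proof.
elim: s => //= a s IH; rewrite in_cons => /orP [/eqP ->|/IH]; [left|right] => //.
Qed.

Lemma dim_uniq P L (S : P -> Prop) a b : is_dim L S a -> is_dim L S b -> a = b.
Proof.
move=> [_ [[f hf] ha]] [_ [[g hg] hb]].
case: (ltngtP a b) => // h; exfalso.
  exact: (hb _ f h hf).
exact: (ha _ g h hg).
Qed.

Lemma dim_nonempty P L (S : P -> Prop) a : is_dim L S a -> exists x, S x.
Proof.
move=> [_ [[f hf] _]]; exists (f ord0); rewrite -hf; apply: cl_sub; by exists ord0.
Qed.

Section Idx.
Variables (P : Type) (L : (P -> Prop) -> Prop) (T : finType) (p : T -> P).
Local Notation cl X := (Defs.closure L X).
Hypothesis Hex : exchange_axiom L.

Lemma steinitz (s : seq T) A G : uniq s ->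
  (forall i, i \in s -> ~ cl (fun x => A x \/ exists j, j \in s /\ j != i /\ p j = x) (p i)) ->
  (forall i, i \in s -> cl (fun x => A x \/ List.In x G) (p i)) ->
  size s <= size G.
Proof.
elim: s A G => [|i s IH] A G //= /andP [nis us] hind hspan.
have hAi : ~ cl A (p i).
  move=> h; apply: (hind i (mem_head _ _)); apply: cl_mono h => x hx; by left.
have [G1 [g [G2 [eG hg]]]] := exch_step Hex (hspan i (mem_head _ _)) hAi.
have := IH (fun x => A x \/ x = p i) (G1 ++ G2) us.
have H1 : forall i', i' \in s ->
   ~ cl (fun x => (A x \/ x = p i) \/ exists j, j \in s /\ j != i' /\ p j = x) (p i').
  move=> i' hi' hc; apply: (hind i'); first by rewrite in_cons hi' orbT.
  apply: cl_mono hc => x [[hx|->]|[j [hj [ne <-]]]]; first by left.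
    right; exists i; split; first exact: mem_head.
    split => //; apply/eqP => e; subst; by rewrite hi' in nis.
  by right; exists j; rewrite in_cons hj orbT.
have H2 : forall i', i' \in s -> cl (fun x => (A x \/ x = p i) \/ List.In x (G1 ++ G2)) (p i').
  move=> i' hi'.
  apply: (cl_idem _ (hspan i' _)); last by rewrite in_cons hi' orbT.
  move=> x [hx|hx]; first by apply: cl_sub; left; left.
  rewrite eG in hx; case: (List.in_app_or _ _ _ hx) => [h|[<-|h]].
  - by apply: cl_sub; right; apply: List.in_or_app; left.
  - by apply: cl_mono hg => y [hy|[hy|hy]]; [left; left | right | left; right].
  - by apply: cl_sub; right; apply: List.in_or_app; right.
move=> /(_ H1 H2).
by rewrite eG !size_cat /= addnS ltnS.
Qed.

Hypothesis hp : injective p.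
Hypothesis hB : is_base L (range_of p).

Definition sp (I : {set T}) : P -> Prop := cl (fun x => exists i, i \in I /\ p i = x).

Lemma sp_p I j : sp I (p j) <-> j \in I.
Proof.
split; last by move=> hj; apply: cl_sub; exists j.
move=> h; case: (boolP (j \in I)) => // nj; exfalso.
apply: (indep_not_in hB.1 (x := p j) _ _ h); first by exists j.
move=> y [i [hi <-]]; split; first by exists i.
by move/hp => e; subst; rewrite hi in nj.
Qed.

Lemma sp_dim I : I != set0 -> is_dim L (sp I) (#|I|.-1).
Proof.
move=> hI; have ne : 0 < #|I| by rewrite card_gt0.
split; first exact: cl_subspace.
split.
  have [i0 hi0] := set0Pn I hI.
  exists (fun j : 'I_(#|I|.-1.+1) => p (nth i0 (enum I) j)).
  rewrite /sp; f_equal; apply: functional_extensionality => x.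
  apply: propositional_extensionality; split.
    move=> [j <-]; exists (nth i0 (enum I) j); split => //.
    rewrite -mem_enum mem_nth // -cardE; have := ltn_ord j; move: (nat_of_ord j) => jj; by rewrite prednK.
  move=> [i [hi <-]].
  have hlt : index i (enum I) < #|I|.-1.+1 by rewrite prednK // cardE index_mem mem_enum.
  exists (Ordinal hlt) => /=; by rewrite nth_index // mem_enum.
move=> j g hj heq.
have := @steinitz (enum I) (fun _ => False) (map g (enum 'I_j)) (enum_uniq I).
have H1 : forall i, i \in enum I ->
   ~ cl (fun x => False \/ exists j0, j0 \in enum I /\ j0 != i /\ p j0 = x) (p i).
  move=> i hi hc; apply: (indep_not_in hB.1 (x := p i) _ _ hc); first by exists i.
  move=> y [[]|[j' [hj' [ne' <-]]]]; split; first by exists j'.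
  by move/hp => e; rewrite e eqxx in ne'.
have H2 : forall i, i \in enum I -> cl (fun x => False \/ List.In x (map g (enum 'I_j))) (p i).
  move=> i hi; rewrite mem_enum in hi.
  have : sp I (p i) by apply/sp_p.
  rewrite -heq; apply: cl_mono => x [y <-]; right.
  apply: List.in_map; apply: in_In; by rewrite mem_enum.
move=> /(_ H1 H2); rewrite size_map size_enum_ord -cardE.
lia.
Qed.

Lemma sp0 x : ~ sp set0 x.
Proof. apply: cl_empty => y [i [hi _]]; by rewrite in_set0 in hi. Qed.

Lemma sp_meet_eq I J : (fun x => sp I x /\ sp J x) = sp (I :&: J).
Proof.
apply: functional_extensionality => x; apply: propositional_extensionality; split.
  move=> [h1 h2].
  have := cl_meet Hex hB.1 _ _ h1 h2.
  have H : forall K : {set T}, Defs.subset (fun x => exists i, i \in K /\ p i = x) (range_of p).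
    by move=> K y [i [_ <-]]; exists i.
  move=> /(_ (H I) (H J)); apply: cl_mono => y [[i [hi <-]] [j [hj e]]].
  move/hp: e => e; subst; exists i; by rewrite inE hi hj.
move=> h; split; apply: cl_mono h => y [i [hi <-]]; exists i; move: hi; rewrite inE => /andP [] //.
Qed.

Lemma sp_inj I J : sp I = sp J -> I = J.
Proof.
move=> e; apply/setP => j; apply/idP/idP => h.
  by apply/sp_p; rewrite -e; apply/sp_p.
by apply/sp_p; rewrite e; apply/sp_p.
Qed.

Lemma sp_dim_iff J k : 0 < k -> is_dim L (sp J) k.-1 <-> #|J| = k.
Proof.
move=> hk; split.
  move=> hd; case: (boolP (J == set0)) => [/eqP h0|hJ].
    by have [x hx] := dim_nonempty hd; rewrite h0 in hx; case: (sp0 hx).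
  have := dim_uniq hd (sp_dim hJ); have : 0 < #|J| by rewrite card_gt0.
  lia.
move=> hc; have hJ : J != set0 by rewrite -card_gt0 hc.
by have := sp_dim hJ; rewrite hc.
Qed.

Variable k : nat.
Local Notation Bk := (base_subset L k (range_of p)).

Lemma bs_flat B' V : base_subset L k B' V -> Defs.subset V (cl (fun x => V x /\ B' x)).
Proof.
move=> [_ [X [XB <-]]]; apply: cl_mono => x hx; split; [exact: cl_sub | exact: XB].
Qed.

Lemma bs_subspace B' V : base_subset L k B' V -> is_subspace L V.
Proof. move=> [_ [X [_ <-]]]; exact: cl_subspace. Qed.

Lemma bs_sp V : Bk V -> exists I : {set T}, #|I| = k.+1 /\ V = sp I.
Proof.
move=> hV; have [hd [X [XB eV]]] := hV.
pose I := [set i | pb (V (p i))].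
have eVI : V = sp I.
  apply: functional_extensionality => x; apply: propositional_extensionality; split.
    rewrite -{1}eV; apply: cl_mono => y hy; have [i ei] := XB y hy.
    exists i; split => //; rewrite inE; apply/pbP; rewrite ei -eV; exact: cl_sub.
  apply: cl_min; first by rewrite -eV; exact: cl_subspace.
  by move=> y [i [hi <-]]; move: hi; rewrite inE => /pbP.
exists I; split => //.
have hI : I != set0.
  apply/negP => /eqP h0; have [x hx] := dim_nonempty hd.
  by rewrite eVI h0 in hx; case: (sp0 hx).
rewrite eVI in hd; have := dim_uniq hd (sp_dim hI).
have : 0 < #|I| by rewrite card_gt0.
lia.
Qed.

Lemma sp_bs (I : {set T}) : #|I| = k.+1 -> Bk (sp I).
Proof.
move=> hc; split.
  have hI : I != set0 by rewrite -card_gt0 hc.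
  by have := sp_dim hI; rewrite hc.
exists (fun x => exists i, i \in I /\ p i = x); split => //.
by move=> x [i [_ <-]]; exists i.
Qed.

Definition Rab a b : (P -> Prop) -> Prop := fun V => Bk V /\ V (p a) /\ ~ V (p b).

Lemma Rab_sp a b (Z : {set T}) : Rab a b (sp Z) <-> [/\ #|Z| = k.+1, a \in Z & b \notin Z].
Proof.
split.
  move=> [hb [ha nb]]; have [I [cI e]] := bs_sp hb.
  have eZ := sp_inj e; subst I.
  split => //; first by apply/sp_p.
  by apply/negP => /sp_p.
move=> [cZ aZ bZ]; split; first exact: sp_bs.
split; first by apply/sp_p.
by move/sp_p; rewrite (negbTE bZ).
Qed.

End Idx.


Section Crit.
Variables (P : Type) (L : (P -> Prop) -> Prop) (T : finType) (p : T -> P).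
Local Notation cl X := (Defs.closure L X).
Hypothesis Hex : exchange_axiom L.
Hypothesis hL : is_linear_space L.
Hypothesis hP2 : axiom_P2 L.
Hypothesis hp : injective p.
Hypothesis hB : is_base L (range_of p).
Variable k : nat.
Local Notation Bk := (base_subset L k (range_of p)).
Local Notation RR := (Rab L p k).

Lemma exact_crit S : Defs.subset S Bk ->
  (forall a b, a != b -> exists V, S V /\ V (p a) /\ ~ V (p b)) -> exact L k Bk S.
Proof.
move=> SB hS; split => // B' hB' SB'.
have hBB' : forall i, B' (p i).
  move=> i.
  have claim : forall s : seq T, exists F : P -> Prop, F (p i) /\
      Defs.subset F (cl (fun x => F x /\ range_of p x)) /\
      Defs.subset F (cl (fun x => F x /\ B' x)) /\
      (forall j, j \in s -> j != i -> ~ F (p j)).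
    elim=> [|j s [F [Fi [F1 [F2 F3]]]]].
      exists (fun _ => True); split => //; split; [|split] => //.
        move=> x _; have : cl (range_of p) x by rewrite hB.2.
        by apply: cl_mono => y hy; split.
      move=> x _; have : cl B' x by rewrite hB'.2.
      by apply: cl_mono => y hy; split.
    case: (eqVneq j i) => [->|ne].
      exists F; split => //; split => //; split => //.
      by move=> j0; rewrite in_cons => /orP [/eqP ->|hj0]; [rewrite eqxx | apply: F3].
    have ij : i != j by rewrite eq_sym.
    have [V [SV [Vi Vj]]] := hS i j ij.
    exists (fun x => F x /\ V x); split; first by split.
    split; [|split].
    - move=> x [Fx Vx]; have h1 := F1 x Fx; have h2 := bs_flat (SB V SV) Vx.
      have := cl_meet Hex hB.1 (fun y (hy : _ /\ _) => proj2 hy) (fun y (hy : _ /\ _) => proj2 hy) h1 h2.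
      by apply: cl_mono => y [[Fy _] [Vy By]].
    - move=> x [Fx Vx]; have h1 := F2 x Fx; have h2 := bs_flat (SB' V SV) Vx.
      have := cl_meet Hex hB'.1 (fun y (hy : _ /\ _) => proj2 hy) (fun y (hy : _ /\ _) => proj2 hy) h1 h2.
      by apply: cl_mono => y [[Fy _] [Vy By]].
    - move=> j0; rewrite in_cons => /orP [/eqP -> _ [_ hV] | hj0 ne0 [hF _]].
        exact: Vj hV.
      exact: F3 j0 hj0 ne0 hF.
  have [F [Fi [F1 [F2 F3]]]] := claim (enum T).
  have h := F2 _ Fi.
  case: (classic (exists y, F y /\ B' y)) => [[y [Fy B'y]]|no]; last first.
    by exfalso; apply: (cl_empty _ h) => y hy; apply: no; exists y.
  have single : Defs.subset (cl (fun x => F x /\ range_of p x)) (fun x => x = p i).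
    apply: cl_min.
      by rewrite /is_subspace => l _ a b ab ha hb; case: ab; rewrite ha hb.
    move=> x [Fx [j ej]]; case: (eqVneq j i) => [e|ne]; first by rewrite -ej e.
    by exfalso; apply: (F3 j _ ne); [rewrite mem_enum | rewrite ej].
  by have e := single _ (F1 _ Fy); rewrite -e.
have eB : forall x, B' x <-> range_of p x.
  move=> x; split; last by move=> [j <-].
  move=> B'x; case: (classic (range_of p x)) => // nx; exfalso.
  apply: (hB'.1 (fun y => B' y /\ y <> x)).
  - by move=> y [].
  - by exists x; split => //; case.
  apply: functional_extensionality => z; apply: propositional_extensionality; split.
    by apply: cl_mono => y [].
  move=> _; have : cl (range_of p) z by rewrite hB.2.
  apply: cl_mono => y hy; split; first by case: hy => j <-; apply: hBB'.
  by move=> e; apply: nx; rewrite -e.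
move=> V; split.
  move=> [hd [X [XB eX]]]; split => //; exists X; split => //.
  by move=> y /XB /eB.
move=> [hd [X [XB eX]]]; split => //; exists X; split => //.
by move=> y /XB /eB.
Qed.

Lemma exact_mono S S' : Defs.subset S S' -> Defs.subset S' Bk ->
  exact L k Bk S -> exact L k Bk S'.
Proof.
move=> SS' S'B [_ hS]; split => // B' hb h.
by apply: (hS B' hb) => V hV; apply: h; apply: SS'.
Qed.

Lemma third a b : a != b -> exists l q, L l /\ l (p a) /\ l (p b) /\ l q /\
  q <> p a /\ q <> p b.
Proof.
move=> ab; have ne : p a <> p b by move/hp => e; rewrite e eqxx in ab.
have [_ [_ h3]] := hL.
have [l [Ll [la [lb _]]]] := h3 _ _ ne.
have [x [y [z [lx [ly [lz [xy [xz yz]]]]]]]] := hP2 Ll.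
case: (classic (x <> p a /\ x <> p b)) => [[h1 h2]|hx].
  by exists l, x.
case: (classic (y <> p a /\ y <> p b)) => [[h1 h2]|hy].
  by exists l, y.
have hx' : x = p a \/ x = p b.
  by apply: NNPP => h; apply: hx; split => e; apply: h; [left|right].
have hy' : y = p a \/ y = p b.
  by apply: NNPP => h; apply: hy; split => e; apply: h; [left|right].
exists l, z; do 4 (split => //); split => e; case: hx' => ex; case: hy' => ey; congruence.
Qed.

Lemma inexact_C a b : a != b -> (exists V0, RR a b V0) ->
  inexact L k Bk (fun V => Bk V /\ ~ RR a b V).
Proof.
move=> ab [V0 hV0]; split; first by move=> V [].
move=> [_ hex].
have [l [q [Ll [la [lb [lq [qa qb]]]]]]] := third ab.
have pab : p a <> p b by move/hp => e; rewrite e eqxx in ab.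
have K : forall S, is_subspace L S -> S q -> S (p b) -> S (p a).
  by move=> S hS Sq Sb; apply: (sub_line hS Ll qb Sq Sb lq lb la).
have K2 : forall S, is_subspace L S -> S (p a) -> S (p b) -> S q.
  by move=> S hS Sa Sb; apply: (sub_line hS Ll pab Sa Sb la lb lq).
have K3 : forall S, is_subspace L S -> S (p a) -> S q -> S (p b).
  by move=> S hS Sa Sq; apply: (sub_line hS Ll (fun e => qa (esym e)) Sa Sq la lq lb).
have hBi := hB.1.
have Qf : forall Y, cl Y q -> Defs.subset Y (fun y => range_of p y /\ y <> p a) -> False.
  move=> Y hq hY.
  apply: (@indep_not_in P L (range_of p) (fun y => range_of p y /\ y <> p a) (p a) hBi (ex_intro _ a erefl) (fun y h => h)).
  apply: (K _ (@cl_subspace _ L _)); [exact: cl_mono hY _ hq |].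
  apply: cl_sub; split; first by exists b.
  by move=> e; apply: pab; rewrite e.
have qB : ~ range_of p q.
  move=> [c ec].
  apply: (indep_not_in hBi (x := q) (Y := fun y => y = p a \/ y = p b)).
  - by exists c.
  - move=> y [->|->]; split; [by exists a | by move=> e; apply: qa; rewrite e
                             | by exists b | by move=> e; apply: qb; rewrite e].
  - apply: (K2 _ (@cl_subspace _ L _)); [apply: cl_sub; left | apply: cl_sub; right] => //.
pose B' := fun x => (range_of p x /\ x <> p a) \/ x = q.
have hB'base : is_base L B'.
  split.
    move=> Y YB' [x [B'x nYx]] eY.
    have hx : cl (fun y => B' y /\ y <> x) x.
      have : cl B' x by apply: cl_sub.
      rewrite -eY; apply: cl_mono => y hy; split; first exact: YB'.
      by move=> e; subst.
    case: B'x => [[rx xa]|ex].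
      pose A := fun y => range_of p y /\ y <> p a /\ y <> x.
      have xq : x <> q by move=> e; apply: qB; rewrite -e.
      have hxA : cl (fun y => A y \/ y = q) x.
        apply: cl_mono hx => y [[[ry ya]|->] yx]; [by left | by right].
      have nAx : ~ cl A x.
        by move=> h; apply: (indep_not_in hBi rx _ h) => y [ry [_ yx]]; split.
      case: (classic (cl A q)) => hAq.
        apply: nAx; apply: (cl_idem (X := fun y => A y \/ y = q)) hxA.
        by move=> y [hy|->]; [apply: cl_sub | apply: hAq].
      have := Hex hAq nAx hxA.
      by move=> h; apply: (Qf _ h) => y [[ry [ya _]]|->]; split.
    subst x; apply: (Qf _ hx) => y [[[ry ya]|yq] ny]; [by split | by exfalso].
  apply: functional_extensionality => x; apply: propositional_extensionality; split => // _.
  have : cl (range_of p) x by rewrite hB.2.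
  apply: cl_idem => y [c <-].
  case: (eqVneq c a) => [->|ne].
    apply: (K _ (@cl_subspace _ L _)); [apply: cl_sub; right | apply: cl_sub; left; split] => //.
      by exists b.
    by move=> e; apply: pab.
  apply: cl_sub; left; split; first by exists c.
  by move/hp => e; rewrite e eqxx in ne.
have hsub : Defs.subset (fun V => Bk V /\ ~ RR a b V) (base_subset L k B').
  move=> V [hV nR]; split; first exact: hV.1.
  exists (fun y => V y /\ B' y); split; first by move=> y [].
  apply: functional_extensionality => x; apply: propositional_extensionality; split.
    by apply: cl_min; [exact: bs_subspace hV | move=> y []].
  move=> Vx; have := bs_flat hV Vx; apply: cl_idem => y [Vy [c ec]].
  case: (eqVneq c a) => [eca|nca].
    subst c y.
    have Vb : V (p b) by apply: NNPP => nb; apply: nR; split.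
    have Vq : V q := K2 _ (bs_subspace hV) Vy Vb.
    apply: (K _ (@cl_subspace _ L _)); [apply: cl_sub; split => //; by right |].
    apply: cl_sub; split => //; left; split; first by exists b.
    by move=> e; apply: pab.
  apply: cl_sub; split => //; left; split; first by exists c.
  by rewrite -ec; move/hp => e; rewrite e eqxx in nca.
have eqs := hex B' hB'base hsub.
have [_ [X [XB eX]]] := (eqs V0).2 hV0.1.
have nq : ~ V0 q.
  by move=> Vq; apply: hV0.2.2; apply: K3 (bs_subspace hV0.1) hV0.2.1 Vq.
apply: (indep_not_in hBi (x := p a) (Y := X)).
- by exists a.
- move=> y Xy; case: (XB y Xy) => [[ry ya]|yq]; first by split.
  by exfalso; apply: nq; rewrite -yq -eX; apply: cl_sub.
- by rewrite eX; exact: hV0.2.1.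
Qed.

Lemma comp_suff a b : a != b -> (exists V0, RR a b V0) ->
  (forall i j, i != j -> ~ (i = a /\ j = b) ->
     exists V, Bk V /\ ~ RR a b V /\ V (p i) /\ ~ V (p j)) ->
  complement_subset L k Bk (RR a b).
Proof.
move=> ab hV0 hW; split; first by move=> V [].
move=> C; split; first exact: inexact_C.
move=> S CS SB [U [SU nCU]] [_ nex]; apply: nex.
apply: exact_crit => // i j ij.
case: (classic (i = a /\ j = b)) => [[-> ->]|nij].
  exists U; split => //.
  have BU := SB U SU.
  have : RR a b U by apply: NNPP => h; apply: nCU; split.
  by move=> [_ [ha nb]]; split.
have [V [BV [nR [Vi nVj]]]] := hW i j ij nij.
by exists V; split => //; apply: CS; split.
Qed.

Lemma comp_nec R : (forall a b, a != b -> (exists V0, RR a b V0)) ->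
  complement_subset L k Bk R -> exists a b, a != b /\ seteq R (RR a b).
Proof.
move=> hV0 [RB H]; cbv zeta in H; case: H => [[CB nexC] hmax].
have : ~ forall a b, a != b -> exists V, (Bk V /\ ~ R V) /\ V (p a) /\ ~ V (p b).
  by move=> h; apply: nexC; apply: exact_crit.
move/not_all_ex_not => [a /not_all_ex_not [b hab]].
have ab : a != b by apply: NNPP => h; apply: hab => h'; contradiction.
have nV : forall V, Bk V -> ~ R V -> ~ (V (p a) /\ ~ V (p b)).
  by move=> V h1 h2 h3; apply: hab => _; exists V.
exists a, b; split => // V; split.
  move=> RV; have BV := RB V RV; split => //.
  apply: NNPP => hn.
  apply: (hmax (fun W => (Bk W /\ ~ R W) \/ W = V)).
  - by move=> W hW; left.
  - by move=> W [[]|->].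
  - by exists V; split; [right | case].
  split; first by move=> W [[]|->].
  move=> hex; apply: (inexact_C ab (hV0 a b ab)).2.
  apply: exact_mono hex; last by move=> W [].
  move=> W [[BW nRW]|->]; split => //.
    by move=> [_ hh]; apply: (nV W BW nRW hh).
  by move=> [_ hh]; apply: hn.
move=> [BV hV]; apply: NNPP => nRV; exact: nV V BV nRV hV.
Qed.

End Crit.


Section Comb.
Variable T : finType.

Lemma sub_card (F : {set T}) r : r <= #|F| -> exists S : {set T}, S \subset F /\ #|S| = r.
Proof.
elim: r => [|r IH] h; first by exists set0; rewrite sub0set cards0.
have [S [sS cS]] := IH (ltnW h).
have : ~~ (F \subset S).
  apply/negP => /subset_leq_card; lia.
case/subsetPn => x xF xS.
exists (x |: S); split; last by rewrite cardsU1 xS cS.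
apply/subsetP => y; rewrite in_setU1 => /orP [/eqP ->|/(subsetP sS)] //.
Qed.

Lemma ext_set (Req Forb : {set T}) r :
  (forall x, x \in Req -> x \notin Forb) -> #|Req| <= r -> r + #|Forb| <= #|T| ->
  exists Z : {set T}, [/\ #|Z| = r, Req \subset Z & forall x, x \in Forb -> x \notin Z].
Proof.
move=> H hR hF.
have h0 : Req :&: Forb = set0.
  apply/setP => x; rewrite !inE; apply/negbTE/negP => /andP [h1 h2].
  by move: (H x h1); rewrite h2.
set F := ~: (Req :|: Forb).
have cF : #|F| = #|T| - (#|Req| + #|Forb|).
  rewrite /F cardsCs setCK; have := cardsUI Req Forb; rewrite h0 cards0; lia.
have [S [SF cS]] := @sub_card F (r - #|Req|) ltac:(lia).
have dS : Req :&: S = set0.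
  apply/setP => x; rewrite !inE; apply/negbTE/negP => /andP [h1 h2].
  by have := subsetP SF x h2; rewrite !inE h1.
exists (Req :|: S); split.
- have := cardsUI Req S; rewrite dS cards0; lia.
- exact: subsetUl.
move=> x hx; rewrite inE negb_or; apply/andP; split.
  by apply/negP => hR'; move: (H x hR'); rewrite hx.
by apply/negP => /(subsetP SF); rewrite !inE hx orbT.
Qed.

Variables (n k : nat).
Hypothesis hT : #|T| = n.+1.
Hypothesis hk0 : 0 < k.
Hypothesis hk1 : k < n - 1.

Lemma wit0 a b : a != b -> exists Z : {set T}, [/\ #|Z| = k.+1, a \in Z & b \notin Z].
Proof.
move=> ab.
have h1 : forall x, x \in [set a] -> x \notin [set b] by move=> x; rewrite !inE => /eqP ->.
have h2 : #|[set a]| <= k.+1 by rewrite cards1.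
have h3 : k.+1 + #|[set b]| <= #|T| by rewrite cards1 hT; lia.
have [Z [cZ sZ fZ]] := ext_set h1 h2 h3.
by exists Z; split => //; [apply: (subsetP sZ); rewrite inE | apply: fZ; rewrite inE].
Qed.

Lemma wit i j a b : i != j -> a != b -> ~ (i = a /\ j = b) ->
  exists Z : {set T}, [/\ #|Z| = k.+1, i \in Z, j \notin Z & ~~ ((a \in Z) && (b \notin Z))].
Proof.
move=> ij ab nij.
case: (eqVneq i a) => [eia|nia].
  subst a.
  have jb : j != b by apply/eqP => e; apply: nij.
  have h1 : forall x, x \in [set i; b] -> x \notin [set j].
    move=> x; rewrite !inE => /orP [/eqP ->|/eqP ->]; [exact: ij | by rewrite eq_sym].
  have h2 : #|[set i; b]| <= k.+1 by rewrite cards2; case: (i != b) => /=; lia.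
  have h3 : k.+1 + #|[set j]| <= #|T| by rewrite cards1 hT; lia.
  have [Z [cZ sZ fZ]] := ext_set h1 h2 h3.
  exists Z; split => //.
  + by apply: (subsetP sZ); rewrite !inE eqxx.
  + by apply: fZ; rewrite inE.
  + have bZ : b \in Z by apply: (subsetP sZ); rewrite !inE eqxx orbT.
    by rewrite bZ andbF.
have h1 : forall x, x \in [set i] -> x \notin [set j; a].
  by move=> x; rewrite !inE => /eqP ->; rewrite negb_or ij nia.
have h2 : #|[set i]| <= k.+1 by rewrite cards1.
have h3 : k.+1 + #|[set j; a]| <= #|T| by rewrite cards2 hT; case: (j != a) => /=; lia.
have [Z [cZ sZ fZ]] := ext_set h1 h2 h3.
exists Z; split => //.
+ by apply: (subsetP sZ); rewrite !inE.
+ by apply: fZ; rewrite !inE eqxx.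
+ by rewrite (negbTE (fZ a _)) // !inE eqxx orbT.
Qed.

End Comb.


Unset Implicit Arguments.

Theorem lemma2p5 (P : Type) (L : (P -> Prop) -> Prop) (n k : nat)
  (hL : is_linear_space L) (hEx : exchange_axiom L) (hP2 : axiom_P2 L)
  (hdim : is_dim L (fun _ => True) n)
  (hk0 : 0 < k) (hk1 : k < n - 1)
  (p : 'I_n.+1 -> P) (hp : injective p) (hB : is_base L (range_of p))
  (U U' : P -> Prop)
  (hU : base_subset L k (range_of p) U) (hU' : base_subset L k (range_of p) U')
  (hne : U <> U') :
  adjacent L k U U' <->
  exists Rs : 'I_(maxn k (n - k - 1)) -> ((P -> Prop) -> Prop),
    regular L k (base_subset L k (range_of p)) Rs /\
    (forall i, Rs i U /\ Rs i U').
Proof.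
have hT : #|'I_n.+1| = n.+1 := card_ord _.
have Rsp := @Rab_sp P L _ p hEx hp hB k.
have spP := @sp_p P L _ p hp hB.
have bsSp := @bs_sp P L _ p hEx hp hB k.
have spBs := @sp_bs P L _ p hEx hp hB k.
have spInj := @sp_inj P L _ p hp hB.
have hV0 : forall a b, a != b -> exists V0, Rab L p k a b V0.
  move=> a b ab; have [Z [cZ aZ bZ]] := wit0 hT hk0 hk1 ab.
  by exists (sp L p Z); apply/Rsp.
have hW : forall a b, a != b -> forall i j, i != j -> ~ (i = a /\ j = b) ->
    exists V, base_subset L k (range_of p) V /\ ~ Rab L p k a b V /\ V (p i) /\ ~ V (p j).
  move=> a b ab i j ij nij; have [Z [cZ iZ jZ nab]] := wit hT hk0 hk1 ij ab nij.
  exists (sp L p Z); split; first exact: spBs.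
  split; first by move/Rsp => [_ ha hb]; rewrite ha hb in nab.
  split; first by apply/spP.
  by move/spP; apply/negP.
have CS : forall a b, a != b ->
    complement_subset L k (base_subset L k (range_of p)) (Rab L p k a b).
  by move=> a b ab; apply: (comp_suff hEx hL hP2 hp hB ab (hV0 a b ab) (hW a b ab)).
have CN : forall R, complement_subset L k (base_subset L k (range_of p)) R ->
    exists a b, a != b /\ seteq R (Rab L p k a b).
  by move=> R h; apply: (comp_nec hEx hL hP2 hp hB hV0 h).
have Rinj : forall a b a' b', a != b -> a' != b' -> Rab L p k a b = Rab L p k a' b' ->
    a = a' /\ b = b'.
  move=> a b a' b' ab ab' e; apply: NNPP => ne.
  have [V [BV [nR [Va nVb]]]] := hW a' b' ab' a b ab ne.
  by apply: nR; rewrite -e; split.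
have [X [cX eU]] := bsSp _ hU.
have [X' [cX' eU']] := bsSp _ hU'.
subst U U'.
have XX' : X != X' by apply/eqP => e; apply: hne; rewrite e.
have hadj : adjacent L k (sp L p X) (sp L p X') <-> #|X :&: X'| = k.
  by rewrite /adjacent (sp_meet_eq hEx hp hB); apply: (sp_dim_iff hEx hp hB _ hk0).
apply: (iff_trans hadj).
have cUI := cardsUI X X'.
have hIle : #|X :&: X'| <= k.
  have : #|X :&: X'| <= #|X| by apply: subset_leq_card; apply: subsetIl.
  suff : #|X :&: X'| <> k.+1 by lia.
  move=> e; apply: (negP XX').
  have e1 : X :&: X' = X by apply/eqP; rewrite eqEcard subsetIl e cX leqnn.
  have e2 : X :&: X' = X' by apply/eqP; rewrite eqEcard subsetIr e cX' leqnn.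
  by apply/eqP; exact: (etrans (esym e1) e2).
have hO : #|~: (X :|: X')| = n.+1 - #|X :|: X'| by rewrite cardsCs setCK card_ord.
split.
- move=> hI.
  pose Y := X :&: X'. pose O := ~: (X :|: X').
  have cO : #|O| = n - k - 1 by rewrite /O hO; lia.
  have [x xX xX'] : exists2 x, x \in X & x \notin X'.
    have : 0 < #|X :\: X'| by rewrite cardsD; lia.
    by case/card_gt0P => x; rewrite inE => /andP [h1 h2]; exists x.
  have [o oO] : exists o, o \in O by apply/card_gt0P; lia.
  pose m := maxn k (n - k - 1).
  have hm : m <= (n - k - 1) * k.
    have h1 : 0 < n - k - 1 by lia.
    by rewrite geq_max leq_pmull // leq_pmulr.
  have hkm : k <= m := leq_maxl _ _.
  pose af := fun t : 'I_m => nth ord0 (enum Y) (t %% k).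
  pose bf := fun t : 'I_m => nth ord0 (enum O) (t %/ k).
  have cY : size (enum Y) = k by rewrite -cardE.
  have cO' : size (enum O) = n - k - 1 by rewrite -cardE.
  have tdiv : forall t : 'I_m, t %/ k < n - k - 1.
    move=> t; rewrite ltn_divLR //; exact: leq_trans (ltn_ord t) hm.
  have afY : forall t, af t \in Y.
    by move=> t; rewrite -mem_enum; apply: mem_nth; rewrite cY ltn_pmod.
  have bfO : forall t, bf t \in O.
    by move=> t; rewrite -mem_enum; apply: mem_nth; rewrite cO'.
  have afX : forall t, af t \in X /\ af t \in X'.
    by move=> t; have := afY t; rewrite inE => /andP.
  have bfX : forall t, bf t \notin X /\ bf t \notin X'.
    by move=> t; have := bfO t; rewrite !inE negb_or => /andP.
  have abne : forall t, af t != bf t.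
    move=> t; apply/eqP => e; have := (afX t).1; rewrite e.
    by rewrite (negbTE (bfX t).1).
  have xo : x != o by apply/eqP => e; move: oO; rewrite !inE -e xX.
  have pinj : forall t t', af t = af t' -> bf t = bf t' -> t = t'.
    move=> t t' e1 e2; apply: val_inj => /=.
    move/eqP: e1; rewrite /af nth_uniq ?enum_uniq ?cY ?ltn_pmod // => /eqP e1.
    move/eqP: e2; rewrite /bf nth_uniq ?enum_uniq ?cO' ?tdiv // => /eqP e2.
    by rewrite (divn_eq t k) (divn_eq t' k) e1 e2.
  have cover : forall y, y \in Y -> exists t : 'I_m, af t = y.
    move=> y hy.
    have hik : index y (enum Y) < k by rewrite -cY index_mem mem_enum.
    have hi : index y (enum Y) < m := leq_trans hik hkm.
    exists (Ordinal hi); rewrite /af /= modn_small //.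
    by rewrite nth_index // mem_enum.
  pose Rs := fun t : 'I_m => Rab L p k (af t) (bf t).
  exists Rs; split; last first.
    move=> t; split; apply/Rsp; split => //;
      [exact: (afX t).1 | exact: (bfX t).1 | exact: (afX t).2 | exact: (bfX t).2].
  have RsI : forall t t', Rs t = Rs t' -> t = t'.
    move=> t t' e; have [e1 e2] := Rinj _ _ _ _ (abne t) (abne t') e; exact: pinj.
  split; first by move=> t; apply: CS; apply: abne.
  split; first exact: RsI.
  exists (Rab L p k x o).
  split.
    by move=> i; case: (unliftP ord_max i) => [j _|_]; [apply: CS; exact: abne | exact: CS].
  split.
    move=> i i'; case: (unliftP ord_max i) => [j ->|->];
      case: (unliftP ord_max i') => [j' ->|->] // e.
    - by rewrite (RsI _ _ e).
    - have [e1 _] := Rinj _ _ _ _ (abne j) xo e.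
      by move: (afX j).2; rewrite e1 (negbTE xX').
    - have [e1 _] := Rinj _ _ _ _ xo (abne j') e.
      by move: (afX j').2; rewrite -e1 (negbTE xX').
  exists (sp L p X) => V; split.
    move=> hall.
    have hR : Rab L p k x o V by have := hall ord_max; rewrite unlift_none.
    have [Z [cZ eV]] := bsSp _ hR.1; subst V.
    have [_ xZ _] := (Rsp x o Z).1 hR.
    have YZ : Y \subset Z.
      apply/subsetP => y hy; have [t <-] := cover y hy.
      by have := hall (lift ord_max t); rewrite liftK => /Rsp [_ h _].
    have xY : x \notin Y by rewrite inE negb_and xX' orbT.
    have cxY : #|x |: Y| = k.+1 by rewrite cardsU1 xY hI.
    have e1 : x |: Y = Z.
      apply/eqP; rewrite eqEcard cZ cxY leqnn andbT.
      by apply/subsetP => z; rewrite in_setU1 => /orP [/eqP ->|/(subsetP YZ)].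
    have e2 : x |: Y = X.
      apply/eqP; rewrite eqEcard cX cxY leqnn andbT.
      apply/subsetP => z; rewrite in_setU1 => /orP [/eqP ->|] //.
      by rewrite inE => /andP [].
    by rewrite -e1 e2.
  move=> -> i; case: (unliftP ord_max i) => [j _|_]; apply/Rsp; split => //.
  - exact: (afX j).1.
  - exact: (bfX j).1.
  - by move: oO; rewrite !inE negb_or => /andP [].
- move=> [Rs [[hc [hinj [R [hcF [hinjF [W hWu]]]]]] hUU]].
  apply: NNPP => hI.
  have hIk : #|X :&: X'| < k by lia.
  have : forall i : 'I_(maxn k (n - k - 1)).+1, exists ab : 'I_n.+1 * 'I_n.+1,
      ab.1 != ab.2 /\ seteq (match unlift ord_max i with Some j => Rs j | None => R end)
                            (Rab L p k ab.1 ab.2).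
    by move=> i; have [a [b [ab e]]] := CN _ (hcF i); exists (a, b).
  case/fin_all_exists => f hf.
  have hWi : forall i, Rab L p k (f i).1 (f i).2 W.
    by move=> i; apply: ((hf i).2 W).1; apply: ((hWu W).2 erefl i).
  have [Zw [cZw eW]] := bsSp _ (hWi ord_max).1; subst W.
  have hZw : forall i, (f i).1 \in Zw /\ (f i).2 \notin Zw.
    by move=> i; have [_ h1 h2] := (Rsp _ _ Zw).1 (hWi i).
  pose A' := (fun i => (f i).1) @: [set: 'I_(maxn k (n - k - 1)).+1].
  pose Bs' := (fun i => (f i).2) @: [set: 'I_(maxn k (n - k - 1)).+1].
  have disj : forall z, z \in A' -> z \notin Bs'.
    move=> z /imsetP [i _ ->]; apply/negP => /imsetP [j _ e].
    by have := (hZw i).1; rewrite e (negbTE (hZw j).2).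
  have key : forall j : 'I_(maxn k (n - k - 1)),
      [/\ (f (lift ord_max j)).1 \in X :&: X', (f (lift ord_max j)).2 \notin X
        & (f (lift ord_max j)).2 \notin X'].
    move=> j; have h := (hf (lift ord_max j)).2.
    cbv beta in h; rewrite liftK in h.
    have [h1 h2] := hUU j.
    have := (h _).1 h1; have := (h _).1 h2.
    move=> /Rsp [_ a2 b2] /Rsp [_ a1 b1].
    by split => //; rewrite inE a1 a2.
  have A'sub : A' \subset (f ord_max).1 |: (X :&: X').
    apply/subsetP => z /imsetP [i _ ->]; rewrite in_setU1.
    case: (unliftP ord_max i) => [j ->|->]; last by rewrite eqxx.
    by case: (key j) => -> _ _; rewrite orbT.
  have B'sub : Bs' \subset (f ord_max).2 |: ~: (X :|: X').
    apply/subsetP => z /imsetP [i _ ->]; rewrite in_setU1.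
    case: (unliftP ord_max i) => [j ->|->]; last by rewrite eqxx.
    by case: (key j) => _ b1 b2; rewrite !inE negb_or b1 b2 orbT.
  have cA : #|A'| <= #|X :&: X'| + 1.
    have := subset_leq_card A'sub; rewrite cardsU1.
    by case: (_ \notin _) => /=; lia.
  have cB : #|Bs'| <= #|~: (X :|: X')| + 1.
    have := subset_leq_card B'sub; rewrite cardsU1.
    by case: (_ \notin _) => /=; lia.
  have h0 : A' :&: Bs' = set0.
    apply/setP => z; rewrite !inE; apply/negbTE/negP => /andP [h1 h2].
    by move: (disj z h1); rewrite h2.
  have cFree : #|~: (A' :|: Bs')| = n.+1 - (#|A'| + #|Bs'|).
    rewrite cardsCs setCK card_ord; have := cardsUI A' Bs'; rewrite h0 cards0; lia.
  have [x xF] : exists x, x \in ~: (A' :|: Bs') by apply/card_gt0P; lia.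
  have [y yF] : exists y, y \in ~: (A' :|: Bs') :\ x.
    apply/card_gt0P; have := cardsD1 x (~: (A' :|: Bs')); rewrite xF /=.
    move=> hh. rewrite cFree in hh. lia.
  move: yF; rewrite !inE negb_or => /andP [yx /andP [yA yB]].
  move: xF; rewrite !inE negb_or => /andP [xA xB].
  have hs1 : #|A'| <= k by lia.
  have hs2 : #|Bs'| <= n - k - 1 by lia.
  have inall : forall Z : {set 'I_n.+1}, #|Z| = k.+1 -> A' \subset Z ->
      (forall z, z \in Bs' -> z \notin Z) -> sp L p Z = sp L p Zw.
    move=> Z cZ AZ BZ; apply/(hWu (sp L p Z)) => i.
    apply: ((hf i).2 _).2; apply/Rsp; split => //.
      by apply: (subsetP AZ); apply: imset_f; rewrite inE.
    by apply: BZ; apply: imset_f; rewrite inE.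
  have mk : forall u v, u != v -> u \notin A' -> u \notin Bs' -> v \notin A' -> v \notin Bs' ->
      exists Z : {set 'I_n.+1}, [/\ #|Z| = k.+1, u \in Z, v \notin Z &
                                 sp L p Z = sp L p Zw].
    move=> u v uv uA uB vA vB.
    have h1 : forall z, z \in u |: A' -> z \notin v |: Bs'.
      move=> z; rewrite !inE => /orP [/eqP ->|zA]; first by rewrite negb_or uv uB.
      rewrite negb_or disj // andbT; apply/eqP => e; by rewrite -e zA in vA.
    have h2 : #|u |: A'| <= k.+1.
      by rewrite cardsU1 uA; move: hs1; clear; lia.
    have h3 : k.+1 + #|v |: Bs'| <= #|'I_n.+1|.
      by rewrite cardsU1 vB card_ord; move: hs2 hk1; clear; lia.
    have [Z [cZ sZ fZ]] := ext_set h1 h2 h3.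
    exists Z; split => //.
    - by apply: (subsetP sZ); rewrite !inE eqxx.
    - by apply: fZ; rewrite !inE eqxx.
    apply: inall => //.
      by apply/subsetP => z hz; apply: (subsetP sZ); rewrite !inE hz orbT.
    by move=> z hz; apply: fZ; rewrite !inE hz orbT.
  have xy : x != y by rewrite eq_sym.
  have [Z1 [_ xZ1 _ e1]] := mk x y xy xA xB yA yB.
  have [Z2 [_ _ xZ2 e2]] := mk y x yx yA yB xA xB.
  have e12 : Z1 = Z2 by apply: spInj; rewrite e1 e2.
  by move: xZ1; rewrite e12 (negbTE xZ2).
Qed.
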